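(* In the univariate contact-tracing model (described in the context), if $\alpha>\beta>0$, then for every $T\in\mathbb{N}$, every probability distribution $D$ on $\{0,1,2,\dots\}$ and every $p_T\in(0,1]$, the policy that at every step queries a node of largest recency present in the frontier is optimal.
   Context: Univariate model. Fix $T\in\mathbb{N}$, a probability distribution $D$ on $\{0,1,2,\dots\}$, constants $p_T\in(0,1]$, $\alpha\ge 0$, and a discount parameter $\beta>0$. Every node has a recency $h\in\{0,1,\dots,T\}$. Each node (index case or child of an infected node) of recency $h$ is infected independently with probability $p(h)=p_T e^{-\alpha(T-h)}$. If a node of recency $h$ is infected, then for each $j\in\{0,\dots,h-1\}$ it has $Z_j\sim D$ children of recency $j$, all counts independent across $j$ and across nodes and independent of infection statuses. Contact tracing: at step $t=0$ the frontier is a given finite multiset of index cases with known recencies. At each step $t=0,1,2,\dots$ while the frontier is nonempty, the tracer selects one frontier node and queries it, removing it from the frontier. The query reveals its infection status; if it is infected and has recency $h$, benefit $e^{-\beta(h+t)}$ is collected and its children (with their recencies) are added to the frontier; otherwise benefit $0$ is collected and nothing is added. Nodes of the same recency are indistinguishable before being queried, so a policy is a (possibly history-dependent) rule choosing at each step which recency present in the frontier to query. A policy is optimal if for every initial frontier it maximizes the expected total collected benefit over all policies. *)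

(* Defs.v *)
From HB Require Import structures.
From mathcomp Require Import all_boot all_order all_algebra.
From mathcomp Require Import all_classical all_reals all_analysis.
Set Implicit Arguments. Unset Strict Implicit. Unset Printing Implicit Defensive.
Import Order.TTheory GRing.Theory Num.Theory.
Local Open Scope ring_scope.
Local Open Scope ereal_scope.

(* An observation produced by one query: (queried recency h, infection status,
   children counts zs) where nth 0 zs j = Z_j = number of children of recency j
   (zs has length h if infected, [::] otherwise). *)
Definition obs := (nat * bool * seq nat)%type.
Definition history := seq obs.
(* A frontier is a finite multiset of recencies, represented by a list. *)
Definition frontier := seq nat.
Definition policy := history -> frontier -> nat.

Definition admissible (pol : policy) : Prop :=
  forall (hist : history) (F : frontier), F != [::] -> pol hist F \in F.

Definition children (zs : seq nat) : frontier :=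
  flatten [seq nseq (nth 0%N zs j) j | j <- iota 0 (size zs)].

(* Expectation of g (Z_0, ..., Z_{k-1}) (appended to acc) where the Z_j are
   i.i.d. with law D on nat; nonnegative series in the extended reals. *)
Fixpoint Echildren (R : realType) (D : nat -> R) (k : nat) (acc : seq nat)
  (g : seq nat -> \bar R) : \bar R :=
  match k with
  | 0 => g acc
  | k'.+1 => \sum_(z <oo) ((D z)%:E * Echildren D k' (rcons acc z) g)
  end.

Definition infect_prob (R : realType) (T : nat) (pT alpha : R) (h : nat) : R :=
  (pT * expR (- alpha * (T%:R - h%:R)))%R.

Fixpoint Vn (R : realType) (T : nat) (D : nat -> R) (pT alpha beta : R)
  (pol : policy) (n : nat) (hist : history) (F : frontier) : \bar R :=
  match n with
  | 0 => 0
  | n'.+1 =>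
    if F is [::] then 0 else
    let h := pol hist F in
    let t := size hist in
    let p := infect_prob T pT alpha h in
    let F' := rem h F in
    ((1 - p)%R)%:E * Vn T D pT alpha beta pol n' (rcons hist (h, false, [::])) F'
    + p%:E * ((expR (- beta * (h%:R + t%:R)))%:E
              + Echildren D h [::] (fun zs =>
                  Vn T D pT alpha beta pol n' (rcons hist (h, true, zs))
                     (F' ++ children zs)))
  end.

(* Expected total collected benefit from initial frontier F0 (step t = 0):
   the supremum (= monotone limit) of the n-step expected benefits. *)
Definition value (R : realType) (T : nat) (D : nat -> R) (pT alpha beta : R)
  (pol : policy) (F0 : frontier) : \bar R :=
  ereal_sup (range (fun n => Vn T D pT alpha beta pol n [::] F0)).

Definition optimal (R : realType) (T : nat) (D : nat -> R) (pT alpha beta : R)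
  (pol : policy) : Prop :=
  admissible pol /\
  forall (pol' : policy), admissible pol' ->
  forall F0 : frontier, all (fun h => (h <= T)%N) F0 ->
    value T D pT alpha beta pol' F0 <= value T D pT alpha beta pol F0.

Definition greedy_policy : policy := fun _ F => (\max_(h <- F) h)%N.

(* Main.v *)
Require Import Defs.
From HB Require Import structures.
From mathcomp Require Import all_boot all_order all_algebra.
From mathcomp Require Import all_classical all_reals all_analysis.
From mathcomp Require Import lra.
Import Order.TTheory GRing.Theory Num.Theory.
Local Open Scope ring_scope.
Set Implicit Arguments. Unset Strict Implicit. Unset Printing Implicit Defensive.


Section ESec.
Variable R : realType.
Variable D : nat -> R.
Hypothesis D0 : forall n, 0 <= D n.
Hypothesis D1 : (\sum_(n <oo) (D n)%:E = 1)%E.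

Local Notation E := (Echildren D).
Local Open Scope ereal_scope.

Lemma E_ge0 k acc f : (forall zs, size zs = (size acc + k)%N -> 0 <= f zs) ->
  0 <= E k acc f.
Proof.
elim: k acc => [|k IH] acc Hf /=; first by apply: Hf; rewrite addn0.
apply: nneseries_ge0 => n _ _; apply: mule_ge0; first by rewrite lee_fin.
by apply: IH => zs; rewrite size_rcons addSnnS; apply: Hf.
Qed.

Lemma E_le k acc f g : (forall zs, size zs = (size acc + k)%N -> 0 <= f zs) ->
  (forall zs, size zs = (size acc + k)%N -> f zs <= g zs) ->
  E k acc f <= E k acc g.
Proof.
elim: k acc => [|k IH] acc Hf Hfg /=; first by apply: Hfg; rewrite addn0.
apply: lee_nneseries => [n _ _|n _].
  apply: mule_ge0; first by rewrite lee_fin.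
  by apply: E_ge0 => zs; rewrite size_rcons addSnnS; apply: Hf.
apply: lee_wpmul2l; first by rewrite lee_fin.
by apply: IH => zs; rewrite size_rcons addSnnS; [apply: Hf|apply: Hfg].
Qed.

Lemma E_eq k acc f g : (forall zs, size zs = (size acc + k)%N -> f zs = g zs) ->
  E k acc f = E k acc g.
Proof.
elim: k acc => [|k IH] acc Hfg /=; first by apply: Hfg; rewrite addn0.
apply: eq_eseriesr => n _; congr (_ * _).
by apply: IH => zs; rewrite size_rcons addSnnS; apply: Hfg.
Qed.

Lemma E_Z k acc (x : R) f : (forall zs, 0 <= f zs) ->
  E k acc (fun zs => x%:E * f zs) = x%:E * E k acc f.
Proof.
move=> f0; elim: k acc => [|k IH] acc //=.
rewrite -nneseriesZl; last first.
  by move=> n _; apply: mule_ge0; [rewrite lee_fin|apply: E_ge0].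
by apply: eq_eseriesr => n _; rewrite IH muleCA.
Qed.

Lemma E_D k acc f g : (forall zs, 0 <= f zs) -> (forall zs, 0 <= g zs) ->
  E k acc (fun zs => f zs + g zs) = E k acc f + E k acc g.
Proof.
move=> f0 g0; elim: k acc => [|k IH] acc //=.
rewrite -nneseriesD; last 2 first.
- by move=> n _ _; apply: mule_ge0; [rewrite lee_fin|apply: E_ge0].
- by move=> n _ _; apply: mule_ge0; [rewrite lee_fin|apply: E_ge0].
apply: eq_eseriesr => n _; rewrite IH ge0_muleDr //; exact: E_ge0.
Qed.

Lemma E_cst k acc (x : R) : (0 <= x)%R -> E k acc (fun _ => x%:E) = x%:E.
Proof.
move=> x0; elim: k acc => [|k IH] acc //=.
transitivity (\sum_(n <oo) (x%:E * (D n)%:E)).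
  by apply: eq_eseriesr => n _; rewrite IH muleC.
by rewrite nneseriesZl ?D1 ?mule1 // => n _; rewrite lee_fin.
Qed.

Lemma E_sum k acc (g : seq nat -> nat -> \bar R) :
  (forall zs i, 0 <= g zs i) ->
  E k acc (fun zs => \sum_(i <oo) g zs i) = \sum_(i <oo) E k acc (fun zs => g zs i).
Proof.
move=> g0; elim: k acc => [|k IH] acc //=.
transitivity (\sum_(n <oo) \sum_(i <oo) ((D n)%:E * E k (rcons acc n) (fun zs => g zs i))).
  apply: eq_eseriesr => n _; rewrite IH -nneseriesZl //.
  by move=> i _; apply: E_ge0.
rewrite nneseries_interchange; last first.
  by move=> i j; apply: mule_ge0; [rewrite lee_fin|apply: E_ge0].
by [].
Qed.

Lemma E_swap k1 acc1 k2 acc2 (f : seq nat -> seq nat -> \bar R) :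
  (forall a b, 0 <= f a b) ->
  E k1 acc1 (fun a => E k2 acc2 (fun b => f a b)) =
  E k2 acc2 (fun b => E k1 acc1 (fun a => f a b)).
Proof.
move=> f0; elim: k2 acc2 => [|k2 IH] acc2 //=.
rewrite E_sum; last first.
  by move=> zs i; apply: mule_ge0; [rewrite lee_fin|apply: E_ge0].
apply: eq_eseriesr => n _; rewrite E_Z; last by move=> zs; apply: E_ge0.
by rewrite IH.
Qed.

End ESec.


Lemma ptrans (s1 s2 s3 : seq nat) : perm_eq s1 s2 -> perm_eq s2 s3 -> perm_eq s1 s3.
Proof. by move=> a b; apply: perm_trans a b. Qed.

Lemma psym (s1 s2 : seq nat) : perm_eq s1 s2 -> perm_eq s2 s1.
Proof. by rewrite perm_sym. Qed.

Lemma rem_cat (x : nat) (s1 s2 : seq nat) : x \in s1 -> rem x (s1 ++ s2) = rem x s1 ++ s2.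
Proof.
elim: s1 => //= y s IH; rewrite inE; case: (eqVneq y x) => //= _ /= H.
by rewrite IH.
Qed.

Lemma perm_rem (x : nat) (s1 s2 : seq nat) : perm_eq s1 s2 -> perm_eq (rem x s1) (rem x s2).
Proof.
move=> P; case: (boolP (x \in s1)) => xs1.
  have xs2 : x \in s2 by rewrite -(perm_mem P).
  have := ptrans (psym (perm_to_rem xs1)) (ptrans P (perm_to_rem xs2)).
  by rewrite perm_cons.
have xs2 : x \notin s2 by rewrite -(perm_mem P).
by rewrite !rem_id.
Qed.

Lemma rem_comm_perm (x y : nat) (F : seq nat) : x \in F -> y \in F -> x != y ->
  perm_eq (rem y (rem x F)) (rem x (rem y F)).
Proof.
move=> xF yF xy.
have yx : y \in rem x F by rewrite rem_mem // eq_sym.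
have xy' : x \in rem y F by rewrite rem_mem.
have h1 : perm_eq F (x :: y :: rem y (rem x F)).
  by apply: ptrans (perm_to_rem xF) _; rewrite perm_cons; apply: perm_to_rem yx.
have h2 : perm_eq F (y :: x :: rem x (rem y F)).
  by apply: ptrans (perm_to_rem yF) _; rewrite perm_cons; apply: perm_to_rem xy'.
have h3 : perm_eq (y :: x :: rem x (rem y F)) (x :: y :: rem x (rem y F)).
  by apply/permP => P /=; rewrite addnCA.
have := ptrans (psym h1) (ptrans h2 h3).
by rewrite !perm_cons.
Qed.

Lemma children_lt (zs : seq nat) x : x \in children zs -> (x < size zs)%N.
Proof.
rewrite /children => /flatten_mapP [j]; rewrite mem_iota add0n => /andP[_ jl].
by move=> /nseqP [-> _].
Qed.

Lemma max_in (F : seq nat) : F != [::] -> (\max_(h <- F) h)%N \in F.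
Proof.
elim: F => // x s IH _; rewrite big_cons inE.
case: (eqVneq s [::]) => [->|sn]; first by rewrite big_nil maxn0 eqxx.
have := IH sn; case: (leqP x (\max_(h <- s) h)) => H Hin.
  by rewrite Hin orbT.
by rewrite eqxx.
Qed.

Lemma maxE (F : seq nat) m : m \in F -> (forall x, x \in F -> (x <= m)%N) ->
  (\max_(h <- F) h)%N = m.
Proof.
move=> mF H; apply/eqP; rewrite eqn_leq; apply/andP; split.
  by apply/bigmax_leqP_seq => i iF _; apply: H.
exact: (@leq_bigmax_seq _ F xpredT (fun h => h) m mF).
Qed.


Section Model.
Variable R : realType.
Variable D : nat -> R.
Hypothesis D0 : forall n, 0 <= D n.
Hypothesis D1 : (\sum_(n <oo) (D n)%:E = 1)%E.
Variables (T : nat) (pT alpha beta : R).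
Hypothesis beta0 : 0 < beta.
Hypothesis alphabeta : beta < alpha.
Hypothesis pT01 : 0 < pT <= 1.

Local Notation E := (Echildren D).

Definition pc h : R := if (h <= T)%N then infect_prob T pT alpha h else 0.
Definition cc : R := expR (- beta).
Definition ee (h : nat) : R := expR (- beta * h%:R).
Definition rr h : R := pc h * ee h.

Lemma pc_ge0 h : 0 <= pc h.
Proof.
rewrite /pc; case: ifP => // _; rewrite /infect_prob.
by apply: mulr_ge0; [case/andP: pT01 => /ltW|apply: expR_ge0].
Qed.

Lemma pc_le1 h : pc h <= 1.
Proof.
rewrite /pc; case: ifP => // hT; rewrite /infect_prob.
have e1 : expR (- alpha * (T%:R - h%:R)) <= 1.
  rewrite expR_le1; have : (h%:R <= T%:R :> R) by rewrite ler_nat.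
  have a0 : 0 < alpha by apply: lt_trans alphabeta.
  move=> H; nra.
have e0 := expR_ge0 (- alpha * (T%:R - h%:R)).
case/andP: pT01 => p0 p1; nra.
Qed.

Lemma q_ge0 h : 0 <= 1 - pc h.
Proof. by rewrite subr_ge0 pc_le1. Qed.

Lemma cc_ge0 : 0 <= cc. Proof. exact: expR_ge0. Qed.
Lemma cc_le1 : cc <= 1. Proof. by rewrite /cc expR_le1 oppr_le0 ltW. Qed.
Lemma ee_ge0 h : 0 <= ee h. Proof. exact: expR_ge0. Qed.
Lemma rr_ge0 h : 0 <= rr h. Proof. by rewrite mulr_ge0 ?pc_ge0 ?ee_ge0. Qed.

Lemma rr_mono h m : (h <= m)%N -> (m <= T)%N -> rr h <= rr m.
Proof.
move=> hm mT; have hT : (h <= T)%N by apply: leq_trans hm mT.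
rewrite /rr /pc hT mT /infect_prob /ee -!mulrA -!expRD.
apply: ler_wpM2l; first by case/andP: pT01 => /ltW.
rewrite ler_expR; have : (h%:R <= m%:R :> R) by rewrite ler_nat.
move=> H.
have : 0 <= (alpha - beta) * (m%:R - h%:R).
  by apply: mulr_ge0; rewrite subr_ge0 // ltW.
move=> H2; lra.
Qed.

Local Open Scope ereal_scope.

Definition Qop (G : frontier -> \bar R) h F : \bar R :=
  (1 - pc h)%:E * (cc%:E * G (rem h F)) +
  (pc h)%:E * ((ee h)%:E + E h [::] (fun zs => cc%:E * G (rem h F ++ children zs))).

Definition W (G : frontier -> \bar R) h F : \bar R :=
  (1 - pc h)%:E * G (rem h F) +
  (pc h)%:E * E h [::] (fun zs => G (rem h F ++ children zs)).

Fixpoint Gf n F : \bar R :=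
  match n with
  | 0 => 0
  | n'.+1 => if F is [::] then 0 else Qop (Gf n') (\max_(h <- F) h)%N F
  end.

Lemma W_ge0 G h F : (forall S, 0 <= G S) -> 0 <= W G h F.
Proof.
move=> G0; apply: adde_ge0; apply: mule_ge0; rewrite ?lee_fin ?q_ge0 ?pc_ge0 //.
by apply: (E_ge0 D0).
Qed.

Lemma QopE G h F : (forall S, 0 <= G S) -> Qop G h F = (rr h)%:E + cc%:E * W G h F.
Proof.
move=> G0; rewrite /Qop /W (E_Z D0) //.
rewrite ge0_muleDr ?lee_fin ?ee_ge0 //; last first.
  by apply: mule_ge0; [rewrite lee_fin cc_ge0|apply: (E_ge0 D0)].
rewrite [in RHS]ge0_muleDr; first last.
- by apply: mule_ge0; [rewrite lee_fin pc_ge0|apply: (E_ge0 D0)].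
- by apply: mule_ge0; [rewrite lee_fin q_ge0|].
rewrite (muleCA (1 - pc h)%:E) (muleCA (pc h)%:E) -EFinM.
by rewrite addeCA.
Qed.

Lemma Qop_ge0 G h F : (forall S, 0 <= G S) -> 0 <= Qop G h F.
Proof.
move=> G0; rewrite QopE //; apply: adde_ge0; first by rewrite lee_fin rr_ge0.
by apply: mule_ge0; [rewrite lee_fin cc_ge0|apply: W_ge0].
Qed.

Lemma Gf_ge0 n F : 0 <= Gf n F.
Proof.
elim: n F => [|n IH] [|x s] //=; exact: Qop_ge0.
Qed.

Lemma Gf_S n F : F != [::] -> Gf n.+1 F = Qop (Gf n) (\max_(h <- F) h)%N F.
Proof. by case: F. Qed.

Lemma Gf_perm n F1 F2 : perm_eq F1 F2 -> Gf n F1 = Gf n F2.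
Proof.
elim: n F1 F2 => [|n IH] F1 F2 P //.
case: F1 P => [|x1 s1]; case: F2 => [|x2 s2] P //; try by move/perm_size: P.
rewrite !Gf_S // (perm_big _ P) /Qop.
set m := (\max_(h <- _) h)%N.
have Pr := perm_rem m P.
rewrite (IH _ _ Pr); congr (_ + _ * (_ + E _ _ _)).
by apply: funext => zs; rewrite (IH _ _ (_ : perm_eq _ (rem m (x2 :: s2) ++ children zs))) // perm_cat2r.
Qed.

Lemma Qop_le_size G1 G2 h F : (forall S, 0 <= G1 S) ->
  G1 (rem h F) <= G2 (rem h F) ->
  (forall zs, size zs = h -> G1 (rem h F ++ children zs) <= G2 (rem h F ++ children zs)) ->
  Qop G1 h F <= Qop G2 h F.
Proof.
move=> G0 H1 H2; rewrite /Qop; apply: leeD.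
  apply: lee_wpmul2l; first by rewrite lee_fin q_ge0.
  by apply: lee_wpmul2l; first by rewrite lee_fin cc_ge0.
apply: lee_wpmul2l; first by rewrite lee_fin pc_ge0.
apply: leeD2l; apply: (E_le D0) => zs /= Hs.
  by apply: mule_ge0; [rewrite lee_fin cc_ge0|].
by apply: lee_wpmul2l; [rewrite lee_fin cc_ge0|apply: H2].
Qed.

Lemma Qop_eq_size G1 G2 h F :
  G1 (rem h F) = G2 (rem h F) ->
  (forall zs, size zs = h -> G1 (rem h F ++ children zs) = G2 (rem h F ++ children zs)) ->
  Qop G1 h F = Qop G2 h F.
Proof.
move=> H1 H2; rewrite /Qop H1; congr (_ + _ * (_ + _)).
by apply: E_eq => zs /= Hs; rewrite H2.
Qed.


Ltac pos := repeat match goal with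
 | |- is_true (_ <= GRing.add _ _) => apply: adde_ge0
 | |- is_true (_ <= mule _ _) => apply: mule_ge0
 | |- is_true (_ <= EFin _) => rewrite lee_fin
 | |- is_true (_ <= Echildren _ _ _ _)%E => apply: (E_ge0 D0) => ? ?
 | |- is_true (_ <= W _ _ _)%E => apply: W_ge0 => ?
 | |- is_true (_ <= Qop _ _ _)%E => apply: Qop_ge0 => ?
 | |- is_true (_ <= Gf _ _)%E => apply: Gf_ge0
 | H : forall _, is_true (_ <= _)%E |- is_true (_ <= _)%E => solve [apply: H]
 | |- is_true (_ <= pc _)%R => apply: pc_ge0
 | |- is_true (_ <= 1 - pc _)%R => apply: q_ge0
 | |- is_true (_ <= cc)%R => apply: cc_ge0
 | |- is_true (_ <= rr _)%R => apply: rr_ge0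
 | |- is_true (_ <= ee _)%R => apply: ee_ge0
 | |- is_true (_ <= expR _)%R => apply: expR_ge0
 | |- is_true (_ <= _) => solve [assumption]
end.

Definition Z (G : frontier -> \bar R) x y F : \bar R :=
  (1 - pc x)%:E * W G y (rem x F) +
  (pc x)%:E * E x [::] (fun zs => W G y (rem x F ++ children zs)).

Lemma KE G x y F : (forall S, 0 <= G S) ->
  Qop (Qop G y) x F = (rr x)%:E + cc%:E * ((rr y)%:E + cc%:E * Z G x y F).
Proof.
move=> G0; rewrite QopE; last by move=> S; apply: Qop_ge0.
congr (_ + _ * _); rewrite /W /Z QopE //.
have -> : (fun zs => Qop G y (rem x F ++ children zs)) =
          (fun zs => (rr y)%:E + cc%:E * W G y (rem x F ++ children zs)).
  by apply: funext => zs; rewrite QopE.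
rewrite (@E_D _ _ D0 x [::] (fun _ => (rr y)%:E) (fun zs => cc%:E * W G y (rem x F ++ children zs))); try by move=> ?; pos.
rewrite (E_cst D0 D1) ?rr_ge0 // (E_Z D0); last by move=> ?; pos.
set W1 := W G y (rem x F).
set EW := E x [::] _.
have W10 : 0 <= W1 by rewrite /W1; pos.
have EW0 : 0 <= EW by rewrite /EW; pos.
clearbody W1 EW.
rewrite !ge0_muleDr; try by pos.
rewrite (muleCA (1 - pc x)%:E) (muleCA (pc x)%:E) -!EFinM.
rewrite addeACA -EFinD; congr (_%:E + _).
by rewrite -mulrDl subrK mul1r.
Qed.

Lemma Zexp G x y F : (forall S, 0 <= G S) -> y \in rem x F ->
  Z G x y F =
  ((1 - pc x) * (1 - pc y))%:E * G (rem y (rem x F)) +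
  ((1 - pc x) * pc y)%:E * E y [::] (fun b => G (rem y (rem x F) ++ children b)) +
  (pc x * (1 - pc y))%:E * E x [::] (fun a => G (rem y (rem x F) ++ children a)) +
  (pc x * pc y)%:E * E x [::] (fun a => E y [::] (fun b =>
       G (rem y (rem x F) ++ children a ++ children b))).
Proof.
move=> G0 yx; rewrite /Z /W.
have -> : (fun zs => (1 - pc y)%:E * G (rem y (rem x F ++ children zs)) +
     (pc y)%:E * E y [::] (fun zs0 => G (rem y (rem x F ++ children zs) ++ children zs0))) =
  (fun zs => (1 - pc y)%:E * G (rem y (rem x F) ++ children zs) +
     (pc y)%:E * E y [::] (fun zs0 => G (rem y (rem x F) ++ children zs ++ children zs0))).
  apply: funext => zs; rewrite rem_cat //; congr (_ + _ * E _ _ _).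
  by apply: funext => b; rewrite catA.
set S := rem y (rem x F).
rewrite (@E_D _ _ D0 x [::] (fun zs => (1 - pc y)%:E * G (S ++ children zs))
  (fun zs => (pc y)%:E * E y [::] (fun b => G (S ++ children zs ++ children b))));
  try by move=> ?; pos.
rewrite (@E_Z _ _ D0 x [::] (1 - pc y) (fun zs => G (S ++ children zs))); try by move=> ?; pos.
rewrite (@E_Z _ _ D0 x [::] (pc y) (fun zs => E y [::] (fun b => G (S ++ children zs ++ children b))));
  try by move=> ?; pos.
set a := G S.
set b := E y [::] (fun b => G (S ++ children b)).
set c := E x [::] (fun zs => G (S ++ children zs)).
set d := E x [::] (fun zs => E y [::] (fun b => G (S ++ children zs ++ children b))).
have a0 : 0 <= a by rewrite /a; pos.
have b0 : 0 <= b by rewrite /b; pos.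
have c0 : 0 <= c by rewrite /c; pos.
have d0 : 0 <= d by rewrite /d; pos.
clearbody a b c d.
rewrite !ge0_muleDr; try by pos.
by rewrite !muleA -!EFinM addeA.
Qed.

Lemma Zsym G x y F : (forall S, 0 <= G S) ->
  (forall S1 S2, perm_eq S1 S2 -> G S1 = G S2) ->
  x \in F -> y \in F -> x != y -> Z G x y F = Z G y x F.
Proof.
move=> G0 Gp xF yF xy.
have yx : y \in rem x F by rewrite rem_mem // eq_sym.
have xy' : x \in rem y F by rewrite rem_mem.
have P := rem_comm_perm xF yF xy.
rewrite (Zexp G0 yx) (Zexp G0 xy') (Gp _ _ P).
have -> : (fun b => G (rem x (rem y F) ++ children b)) =
          (fun b => G (rem y (rem x F) ++ children b)).
  by apply: funext => b; apply: Gp; rewrite perm_cat2r perm_sym.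
rewrite (E_swap D0 x [::] y [::]); last by move=> a b; apply: G0.
have -> : (fun b => E x [::] (fun a => G (rem x (rem y F) ++ children b ++ children a))) =
          (fun b => E x [::] (fun a => G (rem y (rem x F) ++ children a ++ children b))).
  apply: funext => b; congr (E _ _ _); apply: funext => a; apply: Gp.
  by apply: perm_cat; [rewrite perm_sym|rewrite perm_catC].
rewrite (mulrC (pc y) (pc x)) (mulrC (1 - pc y)%R (1 - pc x)%R) (mulrC (1 - pc y)%R (pc x)).
rewrite (mulrC (pc y) (1 - pc x)%R).
by rewrite (addeAC _ (((1 - pc x)%R * pc y)%:E * _)).
Qed.

Definition valid (F : frontier) := all (fun h => (h <= T)%N) F.

Lemma valid_rem h F : valid F -> valid (rem h F).
Proof. by move=> /allP vF; apply/allP => x /mem_rem /vF. Qed.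

Lemma valid_ch S zs : valid S -> (size zs <= T)%N -> valid (S ++ children zs).
Proof.
move=> vS sT; rewrite /valid all_cat; apply/andP; split; first exact: vS.
apply/allP => x /children_lt xs.
by apply: leq_trans (ltnW xs) sT.
Qed.

Lemma Gf0_Qop h F : Qop (Gf 0) h F = (rr h)%:E.
Proof.
rewrite QopE; last by move=> S.
have E0 : E h [::] (fun _ : seq nat => (0 : \bar R)) = 0 := E_cst D0 D1 h [::] (lexx 0).
by rewrite /W /= E0 !mule0 adde0 mule0 adde0.
Qed.

Lemma main_step n : forall F h, valid F -> h \in F -> Qop (Gf n) h F <= Gf n.+1 F.
Proof.
elim: n => [|n IH] F h vF hF.
  have Fn : F != [::] by case: F hF vF.
  set m := (\max_(h <- F) h)%N.
  have mF : m \in F := max_in Fn.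
  have hm : (h <= m)%N := @leq_bigmax_seq _ F xpredT (fun h => h) h hF isT.
  have mT : (m <= T)%N := (allP vF) m mF.
  by rewrite Gf_S // !Gf0_Qop lee_fin; apply: rr_mono.
have Fn : F != [::] by case: F hF vF.
set m := (\max_(h <- F) h)%N.
have mF : m \in F := max_in Fn.
have hm : (h <= m)%N := @leq_bigmax_seq _ F xpredT (fun h => h) h hF isT.
have mT : (m <= T)%N := (allP vF) m mF.
have Fle : forall x, x \in F -> (x <= m)%N.
  by move=> x xF; apply: (@leq_bigmax_seq _ F xpredT (fun h => h) x xF isT).
case: (eqVneq h m) => [->|hnm]; first by rewrite (Gf_S n.+1).
rewrite (Gf_S n.+1) // -/m.
have mrh : m \in rem h F by rewrite rem_mem // eq_sym.
have hrm : h \in rem m F by rewrite rem_mem.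
have e1 : Qop (Gf n.+1) h F = Qop (Qop (Gf n) m) h F.
  apply: Qop_eq_size.
    rewrite Gf_S; last by case: (rem h F) mrh.
    congr Qop; apply: maxE => // x /mem_rem; exact: Fle.
  move=> zs sz; rewrite Gf_S; last by case: (rem h F) mrh.
  congr Qop; apply: maxE; first by rewrite mem_cat mrh.
  move=> x; rewrite mem_cat => /orP [/mem_rem|/children_lt]; first exact: Fle.
  by rewrite sz => xh; apply: leq_trans (ltnW xh) hm.
rewrite e1.
apply: (@le_trans _ _ (Qop (Qop (Gf n) h) m F)).
  rewrite !KE; try by move=> S; apply: Gf_ge0.
  rewrite (Zsym (@Gf_ge0 n) (@Gf_perm n) hF mF hnm).
  set z := Z _ _ _ _.
  have z0 : 0 <= z by rewrite /z /Z; pos.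
  have cz0 : 0 <= cc%:E * z by pos.
  clearbody z.
  rewrite !ge0_muleDr ?lee_fin ?rr_ge0 //.
  rewrite !addeA; apply: leeD2r; rewrite -!EFinM -!EFinD lee_fin.
  have := rr_mono hm mT; have := cc_le1; have := rr_ge0 h; nra.
apply: Qop_le_size.
- by move=> S; apply: Qop_ge0; apply: Gf_ge0.
- by apply: IH => //; apply: valid_rem.
- move=> zs sz; apply: IH; last by rewrite mem_cat hrm.
  by apply: valid_ch; [apply: valid_rem|rewrite sz].
Qed.

Lemma alg G h t F : (forall S, 0 <= G S) ->
  (1 - pc h)%:E * ((expR (- beta * (t.+1)%:R))%:E * G (rem h F)) +
  (pc h)%:E * ((expR (- beta * (h%:R + t%:R)))%:E +
     E h [::] (fun zs => (expR (- beta * (t.+1)%:R))%:E * G (rem h F ++ children zs)))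
  = (expR (- beta * t%:R))%:E * Qop G h F.
Proof.
move=> G0.
have e1 : (expR (- beta * (t.+1)%:R) = expR (- beta * t%:R) * cc)%R.
  by rewrite /cc -addn1 natrD mulrDr expRD mulr1.
have e2 : (expR (- beta * (h%:R + t%:R)) = expR (- beta * t%:R) * ee h)%R.
  by rewrite /ee mulrDr expRD mulrC.
rewrite e1 e2 /Qop.
rewrite (@E_Z _ _ D0 h [::] (expR (- beta * t%:R) * cc)%R (fun zs => G (rem h F ++ children zs))) //.
rewrite (@E_Z _ _ D0 h [::] cc (fun zs => G (rem h F ++ children zs))) //.
set g := G (rem h F).
set eg := E h [::] _.
have g0 : 0 <= g by rewrite /g; apply: G0.
have eg0 : 0 <= eg by rewrite /eg; pos.
clearbody g eg.
set et := expR (- beta * t%:R).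
have et0 : (0 <= et)%R by rewrite /et; pos.
clearbody et.
rewrite !EFinM.
rewrite [RHS]ge0_muleDr; try by pos.
rewrite (muleCA et%:E (1 - pc h)%:E) (muleCA et%:E (pc h)%:E) (ge0_muleDr et%:E); try by pos.
by rewrite !muleA.
Qed.

Lemma Vn_S pol n hist F : F != [::] ->
  Vn T D pT alpha beta pol n.+1 hist F =
  ((1 - infect_prob T pT alpha (pol hist F))%R)%:E *
    Vn T D pT alpha beta pol n (rcons hist (pol hist F, false, [::])) (rem (pol hist F) F)
  + (infect_prob T pT alpha (pol hist F))%:E *
    ((expR (- beta * ((pol hist F)%:R + (size hist)%:R)))%:E
     + E (pol hist F) [::] (fun zs =>
         Vn T D pT alpha beta pol n (rcons hist (pol hist F, true, zs))
           (rem (pol hist F) F ++ children zs))).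
Proof. by case: F. Qed.

Lemma Vn_pol_ge0 pol : admissible pol -> forall n hist F, valid F ->
  0 <= Vn T D pT alpha beta pol n hist F.
Proof.
move=> adm; elim=> [|n IH] hist F vF; first by [].
case: (eqVneq F [::]) => [->|Fn]; first by [].
rewrite Vn_S //.
set h := pol hist F.
have hF : h \in F := adm hist F Fn.
have hT : (h <= T)%N := (allP vF) h hF.
have ph : infect_prob T pT alpha h = pc h by rewrite /pc hT.
rewrite ph; apply: adde_ge0; apply: mule_ge0; try by pos.
  by apply: IH; apply: valid_rem.
apply: adde_ge0; first by pos.
apply: (E_ge0 D0) => zs sz; apply: IH.
by apply: valid_ch; [apply: valid_rem|rewrite sz].
Qed.

Lemma Vn_pol_le pol : admissible pol -> forall n hist F, valid F ->
  Vn T D pT alpha beta pol n hist F <= (expR (- beta * (size hist)%:R))%:E * Gf n F.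
Proof.
move=> adm; elim=> [|n IH] hist F vF; first by rewrite /= mule0.
case: (eqVneq F [::]) => [->|Fn]; first by rewrite /= mule0.
rewrite Vn_S //.
set h := pol hist F.
have hF : h \in F := adm hist F Fn.
have hT : (h <= T)%N := (allP vF) h hF.
have ph : infect_prob T pT alpha h = pc h by rewrite /pc hT.
apply: (@le_trans _ _ ((expR (- beta * (size hist)%:R))%:E * Qop (Gf n) h F)); last first.
  by apply: lee_wpmul2l; [pos|apply: main_step].
rewrite -alg; last by move=> S; apply: Gf_ge0.
rewrite ph; apply: leeD.
  apply: lee_wpmul2l; first by pos.
  by have := IH (rcons hist (h, false, [::])) _ (valid_rem h vF); rewrite size_rcons.
apply: lee_wpmul2l; first by pos.
apply: leeD2l; apply: (E_le D0) => zs sz.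
  by apply: Vn_pol_ge0 => //; apply: valid_ch; [apply: valid_rem|rewrite sz].
have vS : valid (rem h F ++ children zs) by apply: valid_ch; [apply: valid_rem|rewrite sz].
by have := IH (rcons hist (h, true, zs)) _ vS; rewrite size_rcons.
Qed.

Lemma Vn_greedy n : forall hist F, valid F ->
  Vn T D pT alpha beta greedy_policy n hist F =
  (expR (- beta * (size hist)%:R))%:E * Gf n F.
Proof.
elim: n => [|n IH] hist F vF; first by rewrite /= mule0.
case: (eqVneq F [::]) => [->|Fn]; first by rewrite /= mule0.
rewrite Vn_S // Gf_S //.
rewrite /greedy_policy.
set m := (\max_(h <- F) h)%N.
have mF : m \in F := max_in Fn.
have mT : (m <= T)%N := (allP vF) m mF.
have ph : infect_prob T pT alpha m = pc m by rewrite /pc mT.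
rewrite ph -alg; last by move=> S; apply: Gf_ge0.
rewrite IH ?size_rcons; last exact: valid_rem.
congr (_ + _ * (_ + _)).
apply: E_eq => zs sz; rewrite IH ?size_rcons //.
by apply: valid_ch; [apply: valid_rem|rewrite sz].
Qed.

End Model.

Unset Implicit Arguments.

Theorem theorem6p5 (R : realType) (alpha beta : R) :
  0 < beta -> beta < alpha ->
  forall (T : nat) (D : nat -> R) (pT : R),
    (forall n, 0 <= D n) ->
    (\sum_(n <oo) (D n)%:E = 1)%E ->
    0 < pT <= 1 ->
    optimal T D pT alpha beta greedy_policy.
Proof.
move=> b0 ab T D pT D0 D1 pT01; split.
  by move=> hist F Fn; apply: max_in.
move=> pol adm F0 vF0; rewrite /value.
apply: ge_ereal_sup => _ [n _ <-].
apply: le_trans (Vn_pol_le D0 D1 b0 ab pT01 adm n [::] vF0) _.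
rewrite -(Vn_greedy D0 b0 ab pT01 n [::] vF0).
by apply: ereal_sup_ubound; exists n.
Qed.
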